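(* Let $G$ be a strongly antimagic graph, let $k\ge1$, and let $V_k=\{v\in V(G):\deg(v)=k\}$. Let $G'$ be the graph obtained from $G$ by attaching, for each vertex $v\in V_k$, a new vertex $v'$ together with the edge $vv'$ (distinct new vertices for distinct $v$). Then $G'$ is strongly antimagic.
   Context: All graphs are finite and simple. For a graph $G=(V,E)$ and a bijection $f:E\to\{1,\dots,|E|\}$, the vertex sum is $\varphi_f(u)=\sum_{e\in E(u)}f(e)$ with $E(u)$ the set of edges incident to $u$; $f$ is strongly antimagic if the $\varphi_f(u)$ are pairwise distinct over $V$ and $\deg(u)<\deg(v)$ implies $\varphi_f(u)<\varphi_f(v)$; a graph is strongly antimagic if it admits such a labeling. *)

(* Defs.v *)
From mathcomp Require Import all_boot.
Set Implicit Arguments. Unset Strict Implicit. Unset Printing Implicit Defensive.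

(* A finite simple graph: vertex set a finType T, adjacency a symmetric
   irreflexive relation e. Edges are the 2-element sets {x,y} with e x y. *)
Definition edges (T : finType) (e : rel T) : {set {set T}} :=
  [set s : {set T} | [exists x : T, exists y : T, e x y && (s == [set x; y])]].

Definition deg (T : finType) (e : rel T) (v : T) : nat := #|[set y | e v y]|.

Definition vsum (T : finType) (e : rel T) (f : {set T} -> nat) (u : T) : nat :=
  \sum_(y | e u y) f [set u; y].

Definition edge_labeling (T : finType) (e : rel T) (f : {set T} -> nat) : Prop :=
  {in edges e &, injective f} /\
  (forall ed, ed \in edges e -> 1 <= f ed <= #|edges e|).

Definition strongly_antimagic_labeling (T : finType) (e : rel T)
    (f : {set T} -> nat) : Prop :=
  [/\ edge_labeling e f,
      injective (vsum e f)
    & forall u v, deg e u < deg e v -> vsum e f u < vsum e f v].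

Definition strongly_antimagic (T : finType) (e : rel T) : Prop :=
  exists f, strongly_antimagic_labeling e f.

(* G' : add a pendant vertex v' (= inr v) to each vertex v of degree k. *)
Definition ext_vertex (T : finType) (e : rel T) (k : nat) : finType :=
  (T + {v : T | deg e v == k})%type.

Definition ext_rel (T : finType) (e : rel T) (k : nat) : rel (ext_vertex e k) :=
  fun a b =>
    match a, b with
    | inl x, inl y => e x y
    | inl x, inr w => x == val w
    | inr w, inl x => val w == x
    | inr _, inr _ => false
    end.
Arguments ext_rel {T} e k _ _.
Arguments ext_vertex {T} e k.

(* Main.v *)
Require Import Defs.
From mathcomp Require Import all_boot zify.
Set Implicit Arguments. Unset Strict Implicit. Unset Printing Implicit Defensive.

Definition Vk (T : finType) (e : rel T) (k : nat) := {v : T | deg e v == k}.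

Definition rk (T : finType) (e : rel T) k (f : {set T} -> nat) (w : Vk e k) : nat :=
  #|[set w' : Vk e k | vsum e f (val w') <= vsum e f (val w)]|.

Definition pend (T : finType) (e : rel T) k (w : Vk e k) : {set ext_vertex e k} :=
  [set inl (val w); inr w].

Definition fx (T : finType) (e : rel T) k (f : {set T} -> nat) (ed : {set ext_vertex e k}) : nat :=
  if [pick w | ed == pend w] is Some w then rk f w
  else f [set x | inl x \in ed] + #|{: Vk e k}|.

Lemma pend_inj (T : finType) (e : rel T) k : injective (@pend T e k).
Proof.
move=> w1 w2 H.
have : inr w1 \in pend w2 by rewrite -H /pend !inE eqxx orbT.
by rewrite /pend !inE => /orP [] // /eqP [].
Qed.

Lemma fx_pend (T : finType) (e : rel T) k f w : @fx T e k f (pend w) = rk f w.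
Proof.
rewrite /fx; case: pickP => [w' /eqP/pend_inj -> //|/(_ w)]; by rewrite eqxx.
Qed.

Lemma fx_old (T : finType) (e : rel T) k f (s : {set T}) :
  @fx T e k f (inl @: s) = f s + #|{: Vk e k}|.
Proof.
rewrite /fx; case: pickP => [w /eqP H|_].
  have : inr w \in inl @: s by rewrite H /pend !inE eqxx orbT.
  by case/imsetP.
congr (f _ + _); apply/setP => x; rewrite inE.
apply/imsetP/idP => [[y ys [->]] //|xs]; by exists x.
Qed.

Lemma old2 (T k : finType) (a b : T) :
  [set (inl a : (T + k)%type); inl b] = inl @: [set a; b].
Proof. by rewrite imsetU1 imset_set1. Qed.

Lemma sumw0 (T : finType) (e : rel T) k (F : Vk e k -> nat) u :
  deg e u != k -> \sum_(w : Vk e k | u == val w) F w = 0.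
Proof.
move=> H; rewrite big_pred0 // => w; apply/negbTE; apply: contra H => /eqP ->.
exact: valP w.
Qed.

Lemma sumw1 (T : finType) (e : rel T) k (F : Vk e k -> nat) (w : Vk e k) :
  \sum_(w' : Vk e k | val w == val w') F w' = F w.
Proof.
by rewrite (eq_bigl (pred1 w)) ?big_pred1_eq // => w'; rewrite /= (inj_eq val_inj) eq_sym.
Qed.

Lemma vsum_inl (T : finType) (e : rel T) k f u :
  vsum (ext_rel e k) (fx f) (inl u) =
  vsum e f u + #|{: Vk e k}| * deg e u + \sum_(w : Vk e k | u == val w) rk f w.
Proof.
rewrite /vsum big_sumType /=; congr (_ + _).
  rewrite (eq_bigr (fun i => f [set u; i] + #|{: Vk e k}|)); last first.
    by move=> i _; rewrite old2 fx_old.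
  rewrite big_split /= mulnC; congr (_ + _).
  rewrite /deg -sum_nat_const; apply: eq_bigl => i; by rewrite inE.
by apply: eq_bigr => w /eqP ->; rewrite fx_pend.
Qed.

Lemma deg_inl (T : finType) (e : rel T) k u :
  deg (ext_rel e k) (inl u) = deg e u + \sum_(w : Vk e k | u == val w) 1.
Proof.
rewrite /deg -!sum1_card big_sumType /=; congr (_ + _); apply: eq_bigl => i; by rewrite !inE.
Qed.

Lemma vsum_inr (T : finType) (e : rel T) k f (w : Vk e k) :
  vsum (ext_rel e k) (fx f) (inr w) = rk f w.
Proof.
rewrite /vsum big_sumType /= [X in _ + X]big_pred0 // addn0.
rewrite (eq_bigl (pred1 (val w))) ?big_pred1_eq; last by move=> x; rewrite /= eq_sym.
by rewrite setUC fx_pend.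
Qed.

Lemma deg_inr (T : finType) (e : rel T) k (w : Vk e k) :
  deg (ext_rel e k) (inr w) = 1.
Proof.
rewrite /deg -!sum1_card big_sumType /=.
rewrite (eq_bigl (pred1 (val w))) ?big_pred1_eq; last by move=> x; rewrite !inE eq_sym.
by rewrite [X in _ + X]big_pred0 // => x; rewrite !inE.
Qed.

Lemma rk_ge1 (T : finType) (e : rel T) k f (w : Vk e k) : 1 <= rk f w.
Proof. by rewrite /rk card_gt0; apply/set0Pn; exists w; rewrite inE. Qed.

Lemma rk_le (T : finType) (e : rel T) k f (w : Vk e k) : rk f w <= #|{: Vk e k}|.
Proof. exact: max_card. Qed.

Lemma rk_lt (T : finType) (e : rel T) k f (w1 w2 : Vk e k) :
  vsum e f (val w1) < vsum e f (val w2) -> rk f w1 < rk f w2.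
Proof.
move=> H; apply: proper_card; apply/properP; split.
  by apply/subsetP => w; rewrite !inE => /leq_trans; apply; apply: ltnW.
by exists w2; rewrite !inE // -ltnNge.
Qed.

Lemma rk_inj (T : finType) (e : rel T) k f :
  injective (vsum e f) -> injective (@rk T e k f).
Proof.
move=> phinj w1 w2 H; apply: val_inj; apply: phinj.
case: (ltngtP (vsum e f (val w1)) (vsum e f (val w2))) => // h.
  by move: (rk_lt h); rewrite H ltnn.
by move: (rk_lt h); rewrite H ltnn.
Qed.

Lemma edges_ext (T : finType) (e : rel T) k (ed : {set ext_vertex e k}) :
  ed \in edges (ext_rel e k) ->
  (exists2 s, s \in edges e & ed = inl @: s) \/ exists w, ed = pend w.
Proof.
rewrite inE => /existsP [x /existsP [y /andP [exy /eqP ->]]].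
case: x exy => [a|w]; case: y => [b|w'] //= exy.
- left; exists [set a; b]; last exact: old2.
  by rewrite inE; apply/existsP; exists a; apply/existsP; exists b; rewrite exy eqxx.
- by right; exists w'; rewrite (eqP exy).
- by right; exists w; rewrite -(eqP exy) setUC.
Qed.

Lemma card_ext (T : finType) (e : rel T) k :
  #|edges e| + #|{: Vk e k}| <= #|edges (ext_rel e k)|.
Proof.
set A := [set (@inl T (Vk e k)) @: s | s : {set T} in edges e].
set B := [set pend w | w : Vk e k].
have cA : #|A| = #|edges e|.
  by rewrite card_imset //; apply: imset_inj => x y [].
have cB : #|B| = #|{: Vk e k}|.
  by rewrite card_imset ?cardsT //; exact: pend_inj.
have AB : A :&: B = set0.
  apply/setP => ed; rewrite !inE.
  apply/negbTE/negP => /andP [/imsetP [s _ ->] /imsetP [w _ H]].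
  have : inr w \in inl @: s by rewrite H !inE eqxx orbT.
  by case/imsetP.
have sub : A :|: B \subset edges (ext_rel e k).
  apply/subsetP => ed; rewrite inE => /orP [/imsetP [s + ->]|/imsetP [w _ ->]].
    rewrite !inE => /existsP [a /existsP [b /andP [eab /eqP ->]]].
    by apply/existsP; exists (inl a); apply/existsP; exists (inl b); rewrite /= eab old2 eqxx.
  rewrite inE; apply/existsP; exists (inl (val w)); apply/existsP; exists (inr w).
  by apply/andP; split; exact: eqxx.
by rewrite -cA -cB; apply: leq_trans (subset_leq_card sub); rewrite cardsU AB cards0 subn0.
Qed.

Lemma c_eq (T : finType) (e : rel T) k u :
  \sum_(w : Vk e k | u == val w) 1 = (deg e u == k).
Proof.
case: (boolP (deg e u == k)) => h; last exact: sumw0.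
exact: (sumw1 (fun _ => 1) (exist _ u h : Vk e k)).
Qed.

Lemma a_le (T : finType) (e : rel T) k f u :
  \sum_(w : Vk e k | u == val w) rk f w <= #|{: Vk e k}|.
Proof.
case: (boolP (deg e u == k)) => h; last by rewrite sumw0.
by rewrite (sumw1 (fun w => rk f w) (exist _ u h : Vk e k)) rk_le.
Qed.

Lemma phi_zero (T : finType) (e : rel T) f u : deg e u = 0 -> vsum e f u = 0.
Proof.
rewrite /deg => /eqP; rewrite cards_eq0 => /eqP H.
rewrite /vsum big_pred0 // => y; move/setP: H => /(_ y); by rewrite !inE.
Qed.

Lemma phi_pos (T : finType) (e : rel T) f u :
  (forall ed, ed \in edges e -> 1 <= f ed <= #|edges e|) ->
  0 < deg e u -> 0 < vsum e f u.
Proof.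
move=> frng; rewrite /deg card_gt0 => /set0Pn [y]; rewrite inE => euy.
rewrite /vsum (bigD1 y) //=.
have : [set u; y] \in edges e.
  by rewrite inE; apply/existsP; exists u; apply/existsP; exists y; rewrite euy eqxx.
by move/frng => /andP [h _]; apply: leq_trans h (leq_addr _ _).
Qed.

Theorem theorem8 (T : finType) (e : rel T) (e_sym : symmetric e)
    (e_irr : irreflexive e) (k : nat) (hk : 1 <= k) :
  strongly_antimagic e -> strongly_antimagic (ext_rel e k).
Proof.
case=> f [[finj frng] phinj phimono].
pose p := #|{: Vk e k}|.
have lt_S : forall u v, deg e u < deg e v \/ (deg e u = deg e v /\ vsum e f u < vsum e f v) ->
    vsum (ext_rel e k) (fx f) (inl u) < vsum (ext_rel e k) (fx f) (inl v).
  move=> u v H; rewrite !vsum_inl; case: H => [hd|[hd hphi]].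
    have h1 := phimono _ _ hd.
    have h2 := @a_le _ e k f u.
    have h3 : #|{: Vk e k}| * (deg e u).+1 <= #|{: Vk e k}| * deg e v by rewrite leq_mul2l hd orbT.
    rewrite mulnS in h3; lia.
  case: (boolP (deg e u == k)) => hu.
    have hv : deg e v == k by rewrite -hd.
    rewrite (sumw1 (fun w => rk f w) (exist _ u hu : Vk e k)).
    rewrite (sumw1 (fun w => rk f w) (exist _ v hv : Vk e k)).
    have := rk_lt (w1 := (exist _ u hu : Vk e k)) (w2 := (exist _ v hv : Vk e k)) hphi.
    rewrite hd; lia.
  have hv : deg e v != k by rewrite -hd.
  rewrite !sumw0 // hd; lia.
have S0 : forall u, deg e u = 0 -> vsum (ext_rel e k) (fx f) (inl u) = 0.
  move=> u hd; rewrite vsum_inl sumw0 ?hd ?phi_zero //; first by rewrite muln0.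
  by rewrite eq_sym -lt0n.
have Sp : forall u, 0 < deg e u -> p < vsum (ext_rel e k) (fx f) (inl u).
  move=> u hd; rewrite vsum_inl.
  have := phi_pos frng hd.
  have : p * 1 <= p * deg e u by rewrite leq_mul2l hd orbT.
  rewrite /p; lia.
have degl : forall u, deg (ext_rel e k) (inl u) = deg e u + (deg e u == k).
  by move=> u; rewrite deg_inl c_eq.
exists (fx f); split.
- split.
  + move=> ed1 ed2 H1 H2.
    case: (edges_ext H1) => [[s1 s1E ->]|[w1 ->]];
      case: (edges_ext H2) => [[s2 s2E ->]|[w2 ->]]; rewrite ?fx_old ?fx_pend.
    * by move/addIn => /(finj _ _ s1E s2E) ->.
    * have := rk_le f w2; have /andP [h _] := frng _ s1E; lia.
    * have := rk_le f w1; have /andP [h _] := frng _ s2E; lia.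
    * by move/(rk_inj phinj) ->.
  + move=> ed H; have cb := card_ext e k.
    case: (edges_ext H) => [[s sE ->]|[w ->]]; rewrite ?fx_old ?fx_pend.
    * have /andP [h1 h2] := frng s sE; apply/andP; split; lia.
    * have := rk_ge1 f w; have := rk_le f w; move=> h1 h2; apply/andP; split; lia.
- move=> [u|w1] [v|w2] H.
  + case: (ltngtP (deg e u) (deg e v)) => hd.
    * by move: (lt_S u v (or_introl hd)); rewrite H ltnn.
    * by move: (lt_S v u (or_introl hd)); rewrite H ltnn.
    case: (ltngtP (vsum e f u) (vsum e f v)) => hp.
    * by move: (lt_S u v (or_intror (conj hd hp))); rewrite H ltnn.
    * by move: (lt_S v u (or_intror (conj (esym hd) hp))); rewrite H ltnn.
    * by rewrite (phinj _ _ hp).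
  + rewrite vsum_inr in H; have := rk_ge1 f w2; have := rk_le f w2.
    case: (posnP (deg e u)) => hd.
      by rewrite -H S0.
    have := Sp u hd; rewrite H /p; lia.
  + rewrite vsum_inr in H; have := rk_ge1 f w1; have := rk_le f w1.
    case: (posnP (deg e v)) => hd.
      by rewrite H S0.
    have := Sp v hd; rewrite -H /p; lia.
  + by rewrite !vsum_inr in H; rewrite (rk_inj phinj H).
- move=> [u|w1] [v|w2]; rewrite ?degl ?deg_inr ?vsum_inr => hd.
  + apply: lt_S; left.
    case: (ltngtP (deg e u) (deg e v)) hd => // h.
      case: (deg e u == k); case: (deg e v == k) => /=; lia.
    by rewrite h ltnn.
  + have h0 : deg e u = 0 by lia.
    by rewrite S0 // rk_ge1.
  + have h0 : 0 < deg e v by case: (posnP (deg e v)) hd => // ->; rewrite add0n; case: eqP => // k0; by rewrite -k0 in hk.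
    have := Sp v h0; have := rk_le f w1; rewrite /p; lia.
  + by [].
Qed.
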